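(* Let $p\geq 3$ be prime and $k\geq 1$ an integer. Then $c_{\mathrm{poly}}(p^k)=k+1$ and $c_{\mathrm{poly}}(2p^k)=2(k+1)$.
   Context: $S(\mathbb{Z}_n)$ is the set of bijections $\mathbb{Z}_n\to\mathbb{Z}_n$, and $S_{\mathrm{poly}}(\mathbb{Z}_n)$ is the set of $\pi\in S(\mathbb{Z}_n)$ for which there is a polynomial $f\in\mathbb{Z}_n[x]$ with $\pi(x)=f(x)$ for all $x\in\mathbb{Z}_n$. $\mathrm{cyc}(\pi)$ is the number of cycles (including fixed points) of $\pi$. Define $c_{\mathrm{poly}}(n)=\min_{\pi\in S_{\mathrm{poly}}(\mathbb{Z}_n)}\max_{k\in\mathbb{Z}_n}\mathrm{cyc}(x\mapsto\pi(x+k))$. *)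

(* Defs.v *)
From HB Require Import structures.
From mathcomp Require Import all_boot all_order all_algebra all_fingroup.
From mathcomp Require Import boolp.
Set Implicit Arguments. Unset Strict Implicit. Unset Printing Implicit Defensive.
Import GRing.Theory.
Local Open Scope ring_scope.

(* Z_n is modelled by 'Z_n, which is Z/nZ for n >= 2 (all uses below have n >= 3). *)

Definition cyc (T : finType) (s : {perm T}) : nat := #|porbits s|.

Definition shiftp (n : nat) (k : 'Z_n) : {perm 'Z_n} :=
  perm (@addIr _ k).

Definition is_poly_perm (n : nat) (s : {perm 'Z_n}) : Prop :=
  exists f : {poly 'Z_n}, forall x : 'Z_n, s x = f.[x].

(* max_k cyc(x |-> pi(x + k)); note (shiftp k * s) x = s (x + k) by permM *)
Definition maxcyc (n : nat) (s : {perm 'Z_n}) : nat :=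
  (\max_(k : 'Z_n) cyc (shiftp k * s)%g)%N.

(* c_poly(n) = min over polynomial permutations of maxcyc.  The default value
   n of the fold is harmless: the identity is a polynomial permutation, and
   maxcyc is always <= #|'Z_n| = n for n >= 2. *)
Definition c_poly (n : nat) : nat :=
  (\big[minn/n]_(s : {perm 'Z_n} | `[< is_poly_perm s >]) maxcyc s)%N.

(* Main.v *)
Require Import Defs.
From mathcomp Require Import all_boot all_order all_algebra all_fingroup all_solvable.
From mathcomp Require Import boolp ring zify.
Set Implicit Arguments. Unset Strict Implicit. Unset Printing Implicit Defensive.
Import GRing.Theory.


Lemma valZ_lt (N : nat) (x : 'Z_N) : 1 < N -> nat_of_ord x < N.
Proof. by move=> N1; have := ltn_ord x; rewrite [in X in _ < X -> _]Zp_cast. Qed.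

Lemma valZ_nat (N : nat) (n : nat) : 1 < N -> nat_of_ord (n%:R : 'Z_N)%R = n %% N.
Proof. by move=> h; rewrite val_Zp_nat. Qed.

Lemma Zp_addE (N : nat) (x y : 'Z_N) : (x + y)%R = ((nat_of_ord x + nat_of_ord y)%:R)%R.
Proof. by rewrite natrD !natr_Zp. Qed.

Lemma Zp_mulE (N : nat) (x y : 'Z_N) : (x * y)%R = ((nat_of_ord x * nat_of_ord y)%:R)%R.
Proof. by rewrite natrM !natr_Zp. Qed.

Definition RR (N d : nat) (x : 'Z_N) (X : nat) := nat_of_ord x %% d = X %% d.

Lemma RR_nat N d n : 1 < N -> d %| N -> RR d (n%:R : 'Z_N)%R n.
Proof. by move=> N1 dN; rewrite /RR valZ_nat // (modn_dvdm _ dN). Qed.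

Lemma RR_val N d (x : 'Z_N) : RR d x (nat_of_ord x).
Proof. by []. Qed.

Lemma RR_add N d (x y : 'Z_N) X Y : 1 < N -> d %| N -> RR d x X -> RR d y Y ->
  RR d (x + y)%R (X + Y).
Proof.
move=> N1 dN; rewrite /RR => hx hy.
by rewrite Zp_addE valZ_nat // (modn_dvdm _ dN) -modnDm hx hy modnDm.
Qed.

Lemma RR_mul N d (x y : 'Z_N) X Y : 1 < N -> d %| N -> RR d x X -> RR d y Y ->
  RR d (x * y)%R (X * Y).
Proof.
move=> N1 dN; rewrite /RR => hx hy.
by rewrite Zp_mulE valZ_nat // (modn_dvdm _ dN) -modnMm hx hy modnMm.
Qed.

Lemma RR_exp N d (x : 'Z_N) X i : 1 < N -> d %| N -> RR d x X -> RR d (x ^+ i)%R (X ^ i).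
Proof.
move=> N1 dN hx; elim: i => [|i IH].
  by rewrite expr0 expn0 -[1%R]/((1%:R : 'Z_N)%R); apply: RR_nat.
by rewrite exprS expnS; apply: RR_mul.
Qed.

Lemma RR_poly N d (f : {poly 'Z_N}) (x : 'Z_N) X : 1 < N -> d %| N -> RR d x X ->
  RR d f.[x]%R (\sum_(i < size f) nat_of_ord (f`_i)%R * X ^ i).
Proof.
move=> N1 dN hx; rewrite horner_coef.
apply: (big_ind2 (fun u U => RR d u U)).
- by rewrite -[0%R]/((0%:R : 'Z_N)%R); apply: RR_nat.
- by move=> *; apply: RR_add.
- by move=> i _; apply: RR_mul => //; apply: RR_exp.
Qed.

Lemma poly_cong N d (f : {poly 'Z_N}) (x y : 'Z_N) : 1 < N -> d %| N ->
  nat_of_ord x %% d = nat_of_ord y %% d -> nat_of_ord f.[x]%R %% d = nat_of_ord f.[y]%R %% d.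
Proof.
move=> N1 dN hxy.
rewrite (RR_poly f N1 dN (RR_val d x)).
by rewrite (RR_poly f N1 dN (esym hxy : RR d y x)).
Qed.

Lemma shiftpE N (k x : 'Z_N) : shiftp k x = (x + k)%R.
Proof. by rewrite /shiftp permE. Qed.

Lemma coprime_small p e : prime p -> odd p -> 0 < e <= 2 -> coprime p e.
Proof.
move=> pp op /andP[e0 e2]; rewrite prime_coprime //.
apply/negP => /dvdn_leq => /(_ e0) pe.
have := odd_prime_gt2 op pp; lia.
Qed.

Lemma lb N c p k (s : {perm 'Z_N}) : prime p -> odd p -> 0 < k -> N = c * p ^ k ->
  (c = 1 \/ c = 2) -> is_poly_perm s -> c * k.+1 <= maxcyc s.
Proof.

move=> pp op k0 NE cE [f hf].
have p1 := prime_gt1 pp.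
have N1 : 1 < N.
  rewrite NE; case: cE => ->; rewrite ?mul1n ?mul2n.
    by rewrite -(exp1n k) ltn_exp2r.
  by rewrite -addnn; have := expn_gt0 p k; rewrite (ltnW p1) /=; lia.
set k1 := (s^-1)%g 0%R.
set sg := (shiftp k1 * s)%g.
have sg0 : sg 0%R = 0%R by rewrite /sg permM shiftpE add0r permKV.
have sgE : forall x, sg x = f.[x + k1]%R by move=> x; rewrite /sg permM shiftpE hf.
have cong : forall d, d %| N -> forall m x y, nat_of_ord x %% d = nat_of_ord y %% d ->
    nat_of_ord ((sg ^+ m)%g x) %% d = nat_of_ord ((sg ^+ m)%g y) %% d.
  move=> d dN m x y hxy; rewrite !permX; elim: m => [|m IH] //=.
  rewrite !sgE; apply: poly_cong => //.
  have h1 := RR_add N1 dN IH (RR_val d k1).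
  have h2 := RR_add N1 dN (RR_val d (iter m sg y)) (RR_val d k1).
  by rewrite /RR in h1 h2; rewrite h1 h2.
have sgm0 : forall m, (sg ^+ m)%g 0%R = 0%R.
  by move=> m; rewrite permX; elim: m => //= m ->.
pose T (i : 'I_c * 'I_k.+1) : nat := (i.1 + 1) * p ^ i.2.
have TN : forall i, T i %| N.
  move=> [e j]; rewrite /T NE /=; apply: dvdn_mul; last first.
    by rewrite dvdn_exp2l // -ltnS.
  move: (ltn_ord e); move: (nat_of_ord e) => n.
  by case: cE => ->; case: n => [|[|]].
have transfer : forall i i', porbit sg (T i)%:R%R = porbit sg (T i')%:R%R -> T i' %| T i.
  move=> i i' E.
  have : ((T i)%:R : 'Z_N)%R \in porbit sg (T i')%:R%R by rewrite -E porbit_id.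
  case/porbitP => m Em.
  have := cong _ (TN i') m ((T i')%:R%R) 0%R.
  rewrite sgm0 -Em !valZ_nat // !(modn_dvdm _ (TN i')) modnn mod0n.
  by move=> /(_ erefl) /eqP.
have Tcop : forall i : 'I_c * 'I_k.+1, coprime p (i.1 + 1).
  move=> [e j] /=; apply: coprime_small => //; rewrite addn1 /=.
  move: (ltn_ord e); move: (nat_of_ord e) => n.
  by case: cE => ->; lia.
have injF : injective (fun i => porbit sg (T i)%:R%R).
  move=> i i' E; have /eqP TE : T i == T i'.
    by rewrite eqn_dvd transfer // transfer.
  have jE : i.2 = i'.2.
    apply: val_inj; move: (congr1 (logn p) TE).
    by rewrite /T !logn_Gauss // !pfactorK.
  move: TE; rewrite /T jE => /eqP; rewrite eqn_pmul2r ?expn_gt0 ?(ltnW p1) //.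
  rewrite eqn_add2r => /eqP eE.
  by move: jE eE; clear E; case: i => e j; case: i' => e' j' /= -> /val_inj ->.
have : #|[set porbit sg (T i)%:R%R | i in {: 'I_c * 'I_k.+1}]| <= cyc sg.
  apply: subset_leq_card; apply/subsetP => X /imsetP [i _ ->].
  by apply: imset_f.
rewrite (card_imset _ injF) card_prod !card_ord => h.
apply: (leq_trans h).
exact: (leq_bigmax (F := fun k => cyc (shiftp k * s)%g) k1).
Qed.

Lemma natZ0 N n : 1 < N -> N %| n -> (n%:R : 'Z_N)%R = 0%R.
Proof. by move=> N1 h; apply: val_inj; rewrite /= val_Zp_nat // (eqP h). Qed.

Lemma ub_cyc N c p k (a : nat) (s : 'Z_N) (sg : {perm 'Z_N}) :
  prime p -> odd p -> 0 < k -> N = c * p ^ k -> (c = 1 \/ c = 2) -> odd a ->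
  coprime p a.-1 -> (forall w, coprime p w -> exists m, a ^ m %% p ^ k = w %% p ^ k) ->
  (forall x, sg x = (a%:R * (x + s))%R) -> cyc sg <= c * k.+1.
Proof.
move=> pp op k0 NE cE oa ca gen sgE.
have p1 := prime_gt1 pp.
set K := p ^ k.
have K1 : 1 < K by rewrite /K -(exp1n k) ltn_exp2r.
have K0 : 0 < K by lia.
have N1 : 1 < N by rewrite NE; case: cE => ->; lia.
have KN : K %| N by rewrite NE dvdn_mull.
have NK : N %| 2 * K by rewrite NE; case: cE => ->; [rewrite mul1n dvdn_mull | ].
have a0 : 0 < a by case: a oa ca gen sgE.
have [b _ hb] := Bezoutl a.-1 K0.
have : coprime K a.-1 by rewrite /K coprime_pexpl.
rewrite /coprime => /eqP g1; rewrite g1 in hb.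
set A := (a%:R : 'Z_N)%R.
have AE : A = ((a.-1)%:R + 1)%R by rewrite /A natr1 prednK.
set x0 := (b%:R * (A * s))%R.
set e := (sg x0 - x0)%R.
have He : sg x0 = (x0 + e)%R by rewrite /e addrC subrK.
have Ee : K %| nat_of_ord e.
  have eE : e = (((1 + b * a.-1)%:R) * (A * s))%R.
    rewrite /e sgE -/A /x0 natrD natrM AE; ring.
  have := RR_mul N1 KN (RR_nat (1 + b * a.-1) N1 KN) (RR_val K (A * s)%R).
  rewrite -eE /RR /dvdn => ->.
  by move: hb; rewrite -modnMml /dvdn => /eqP ->; rewrite mul0n mod0n.
have fixA : forall u m, K %| u -> (A ^+ m * u%:R = u%:R :> 'Z_N)%R.
  move=> u m Ku.
  have am : 0 < a ^ m by rewrite expn_gt0 a0.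
  have h2 : 2 %| a ^ m - 1.
    by rewrite dvdn2 oddB // oddX oa orbT.
  have : N %| (a ^ m - 1) * u by apply: dvdn_trans NK _; apply: dvdn_mul.
  move/(natZ0 N1); rewrite natrM natrB // natrX -/A => /eqP.
  by rewrite mulrBl mul1r subr_eq0 => /eqP.
have Ae : forall m, (A ^+ m * e = e)%R.
  by move=> m; rewrite -[e]natr_Zp fixA.
have iterE : forall m z, (sg ^+ m)%g (x0 + z)%R = (x0 + A ^+ m * z + e * m%:R)%R.
  move=> m z; rewrite permX; elim: m => [|m IH] /=.
    by rewrite expr0 mul1r mulr0 addr0.
  rewrite IH sgE.
  have -> : (A * (x0 + A ^+ m * z + e * m%:R + s) = A * (x0 + s) + A ^+ m.+1 * z + (A * e) * m%:R)%R.
    by rewrite exprS; ring.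
  by rewrite -sgE He (Ae 1%N) -natr1; ring.
pose r (i : 'I_c * 'I_k.+1) : 'Z_N := (x0 + (p ^ i.2 + i.1 * K)%:R)%R.
have cover : forall y, exists i, y \in porbit sg (r i).
  move=> y; set v := nat_of_ord (y - x0)%R.
  have [j [w [jk [cw vw]]]] : exists j w, j <= k /\ coprime p w /\ v %% K = (w * p ^ j) %% K.
    case: (boolP (K %| v)) => hv.
      exists k, 1%N; split => //; split; first exact: coprimen1.
      by rewrite mul1n modnn; apply/eqP.
    have v0 : 0 < v by rewrite lt0n; apply: contraNneq hv => ->; exact: dvdn0.
    have [w cw vE] := pfactor_coprime pp v0.
    exists (logn p v), w; split; last by split => //; rewrite {1}vE.
    rewrite leqNgt; apply: contra hv => h.
    apply: dvdn_trans (pfactor_dvdnn p v).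
    by rewrite /K dvdn_exp2l // ltnW.
  have [m am] := gen w cw.
  set Q := (y - x0 - A ^+ m * (p ^ j)%:R - e * m%:R)%R.
  have QK : K %| nat_of_ord Q.
    have Eq : (y - x0 = Q + A ^+ m * (p ^ j)%:R + e * m%:R)%R by rewrite /Q; ring.
    have R1 := RR_add N1 KN (RR_add N1 KN (RR_val K Q)
         (RR_mul N1 KN (RR_exp m N1 KN (RR_nat a N1 KN)) (RR_nat (p ^ j) N1 KN)))
         (RR_mul N1 KN (RR_val K e) (RR_nat m N1 KN)).
    rewrite -Eq /RR -/v in R1.
    have em : K %| nat_of_ord e * m by apply: dvdn_mulr.
    rewrite -modnDmr (eqP em) addn0 -modnDmr -modnMml am modnMml modnDmr in R1.
    rewrite vw -{1}(add0n (w * p ^ j)) in R1.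
    by move/eqP: R1; rewrite -/K eqn_modDr mod0n eq_sym /dvdn.
  set q := nat_of_ord Q %/ K.
  have Qe : nat_of_ord Q = q * K by rewrite divnK.
  have qc : q < c by rewrite ltn_divLR // -NE valZ_lt.
  exists (Ordinal qc, Ordinal (jk : j < k.+1)).
  apply/porbitP; exists m.
  rewrite iterE /= natrD mulrDr (fixA (q * K)%N) ?dvdn_mull //.
  rewrite -Qe natr_Zp /Q; ring.
have : porbits sg \subset [set porbit sg (r i) | i in {: 'I_c * 'I_k.+1}].
  apply/subsetP => X /imsetP [y _ ->].
  have [i hi] := cover y.
  by rewrite (eqP (_ : porbit sg y == porbit sg (r i))) ?eq_porbit_mem // imset_f.
move/subset_leq_card => h; apply: (leq_trans h).
by apply: (leq_trans (leq_imset_card _ _)); rewrite card_prod !card_ord.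
Qed.

Lemma gen_exists (q p k : nat) : prime p -> odd p -> 0 < k -> q = p ^ k ->
  exists u : 'Z_q, (u \is a GRing.unit)%R /\ forall w, coprime p w -> exists i, (w%:R : 'Z_q)%R = (u ^+ i)%R.
Proof.
move=> pp op k0 qE.
have q1 : 1 < q by rewrite qE -(exp1n k) ltn_exp2r // prime_gt1.
pose x : 'Z_q := Zp1.
have ox : #[x]%g = q by rewrite /x order_Zp1 Zp_cast.
have cA : cyclic (Aut <[x]>).
  have pG : pgroup p <[x]>%G by rewrite /pgroup -orderE ox qE pnatX pnat_id.
  have ntG : <[x]>%G :!=: 1%G.
    by rewrite -cardG_gt1 /= -orderE ox.
  have [m [_ [_ cF _ _]]] := cyclic_pgroup_Aut_structure pG (cycle_cyclic x) ntG.
  case: eqP => [_ ->|_ [t [_ _ _]]] //.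
  by rewrite op => -[[]].
have cU : cyclic (units_Zp q) by rewrite -ox (isog_cyclic (Zp_unit_isog x)).
have [g Eg] := cyclicP cU.
exists (val g); split; first exact: valP.
move=> w cw.
have Uw : ((w%:R : 'Z_q) \is a GRing.unit)%R by rewrite unitZpE // qE coprime_pexpl.
have : FinRing.unit 'Z_q Uw \in <[g]>%g by rewrite -Eg inE.
case/cycleP=> i Ei; exists i.
by rewrite -FinRing.val_unitX -Ei.
Qed.

Lemma gen_a p k : prime p -> odd p -> 0 < k -> exists a,
  [/\ odd a, coprime (p ^ k) a, coprime p a.-1 &
      forall w, coprime p w -> exists m, a ^ m %% p ^ k = w %% p ^ k].
Proof.
move=> pp op k0.
have p1 := prime_gt1 pp.
set K := p ^ k.
have K1 : 1 < K by rewrite /K -(exp1n k) ltn_exp2r.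
have [u [Uu gu]] := gen_exists pp op k0 (erefl K).
set a0 := nat_of_ord u.
have ua : u = (a0%:R)%R by rewrite natr_Zp.
pose a := if odd a0 then a0 else a0 + K.
have aK : a %% K = a0 %% K by rewrite /a; case: ifP => // _; rewrite modnDr.
have oK : odd K by rewrite /K oddX op orbT.
have oa : odd a by rewrite /a; case: ifP => // /negbT h; rewrite oddD oK; case: (odd a0) h.
have ga : forall w, coprime p w -> exists m, a ^ m %% K = w %% K.
  move=> w cw; have [i hi] := gu w cw; exists i.
  move: (congr1 (@nat_of_ord _) hi); rewrite ua -natrX !val_Zp_nat // => ->.
  by rewrite -modnXm aK modnXm.
have cKa : coprime K a by rewrite -coprime_modr aK coprime_modr -unitZpE // -ua.
exists a; split => //.
rewrite prime_coprime //; apply/negP => pa.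
have a0' : 0 < a by case: (a) oa.
have pK : p %| K by rewrite /K dvdn_exp // .
have [m hm] := ga p.-1 (coprimenP (ltnW p1)).
have : a ^ m %% p = p.-1 %% p by rewrite -(modn_dvdm _ pK) hm (modn_dvdm _ pK).
have a1 : a %% p = 1.
  by rewrite -(prednK a0') -addn1 -modnDml (eqP pa) add0n modn_small.
rewrite -modnXm a1 exp1n (modn_small p1) modn_small; last by rewrite prednK // ltnW.
move=> h; have := odd_prime_gt2 op pp; move: h; clear; lia.
Qed.

Lemma ub N c p k : prime p -> odd p -> 0 < k -> N = c * p ^ k -> (c = 1 \/ c = 2) ->
  exists s0 : {perm 'Z_N}, is_poly_perm s0 /\ maxcyc s0 <= c * k.+1.
Proof.
move=> pp op k0 NE cE.
have [a [oa cKa ca ga]] := gen_a pp op k0.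
have p1 := prime_gt1 pp.
have N1 : 1 < N.
  rewrite NE; have : 1 < p ^ k by rewrite -(exp1n k) ltn_exp2r.
  by case: cE => ->; lia.
have UA : ((a%:R : 'Z_N) \is a GRing.unit)%R.
  rewrite unitZpE // NE coprimeMl cKa andbT.
  by case: cE => ->; rewrite ?coprime1n // coprime2n oa.
exists (perm (mulrI UA)); split.
  by exists ((a%:R)%:P * 'X)%R => x; rewrite permE hornerMX hornerC.
apply/bigmax_leqP => s _.
apply: (ub_cyc (a := a) (s := s) pp op k0 NE cE oa ca ga).
by move=> x; rewrite permM shiftpE permE.
Qed.

Lemma bigmin_le (I : finType) (P : pred I) (F : I -> nat) (n : nat) (j : I) :
  P j -> \big[minn/n]_(i | P i) F i <= F j.
Proof.
move=> Pj; have : j \in index_enum I by rewrite mem_index_enum.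
elim: (index_enum I) => // x r IH; rewrite inE big_cons.
case/orP => [/eqP <- | /IH h]; first by rewrite Pj geq_minl.
by case: ifP => // _; apply: leq_trans (geq_minr _ _) h.
Qed.

Lemma c_poly_gen N c p k : prime p -> odd p -> 0 < k -> N = c * p ^ k -> (c = 1 \/ c = 2) ->
  c_poly N = c * k.+1.
Proof.
move=> pp op k0 NE cE.
have p1 := prime_gt1 pp.
apply/eqP; rewrite eqn_leq; apply/andP; split.
  have [s0 [P0 M0]] := ub pp op k0 NE cE.
  apply: leq_trans M0; rewrite /c_poly.
  by apply: (bigmin_le (P := fun s => `[< is_poly_perm s >])); apply/asboolP.
rewrite /c_poly; apply: (big_ind (fun x => c * k.+1 <= x)).
- by rewrite NE leq_mul2l ltn_expl // orbT.
- by move=> x y hx hy; rewrite leq_min hx hy.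
- by move=> s /asboolP Ps; apply: (lb pp op k0 NE cE Ps).
Qed.

Theorem corollary5p4 (p k : nat) :
  prime p -> 3 <= p -> 1 <= k ->
  c_poly (p ^ k) = k.+1 /\ c_poly (2 * p ^ k) = 2 * k.+1.
Proof.
move=> pp p3 k1.
have op : odd p by case: (even_prime pp) => // p2; rewrite p2 in p3.
split.
  by rewrite (@c_poly_gen (p ^ k) 1 p k) ?mul1n //; left.
by rewrite (@c_poly_gen (2 * p ^ k) 2 p k) //; right.
Qed.
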